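(* Let $R$ be a polynomial ring over a field $K$ (standard graded), and let $I$ and $J$ be graded ideals of $R$. Suppose $I$, $J$ and $I+J$ have $d$-linear resolutions. If all elements of a minimal homogeneous generating set $G(I\cap J)$ of $I\cap J$ have degree $d+1$, then $I\cap J$ has a $(d+1)$-linear resolution.
   Context: A graded ideal has a $d$-linear resolution if all its minimal generators have degree $d$ and in its graded minimal free resolution the $i$-th free module is generated in degree $d+i$ for all $i$ (equivalently $\mathrm{Tor}_i(K,I)_j=0$ for $j\neq i+d$). *)

(* Defs.v *)
From HB Require Import structures.
From mathcomp Require Import all_boot all_order all_algebra.
From mathcomp Require Import mpoly.
Set Implicit Arguments. Unset Strict Implicit. Unset Printing Implicit Defensive.
Import GRing.Theory.
Local Open Scope ring_scope.

Section Defs.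
Variables (K : fieldType) (n : nat).
Local Notation R := {mpoly K[n]}.

Definition is_ideal (I : R -> Prop) : Prop :=
  [/\ I 0, (forall p q, I p -> I q -> I (p + q)) & (forall r p, I p -> I (r * p))].

Definition is_graded_ideal (I : R -> Prop) : Prop :=
  is_ideal I /\ (forall p (e : nat), I p -> I (pihomog mdeg e p)).

Definition ideal_sum (I J : R -> Prop) : R -> Prop :=
  fun p => exists a b, [/\ I a, J b & p = a + b].

Definition ideal_cap (I J : R -> Prop) : R -> Prop := fun p => I p /\ J p.

Definition generates (s : seq R) (I : R -> Prop) : Prop :=
  forall p, I p <-> exists c : 'I_(size s) -> R, p = \sum_(i < size s) c i * s`_i.

Definition minimal_homog_gens (s : seq R) (I : R -> Prop) : Prop :=
  [/\ all (fun p => p \is homog mdeg) s, generates s I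
    & forall i : 'I_(size s), ~ generates (take i s ++ drop i.+1 s) I].

(* I has a d-linear resolution: there is a graded free resolution
     ... -> F_2 -> F_1 -> F_0 -> I -> 0,   F_i = R(-d-i)^(b i),
   elements of F_i being row vectors of length b i; the augmentation
   F_0 -> I is v |-> v *m g where g has homogeneous entries of degree d, and
   the differentials F_(i+1) -> F_i are v |-> v *m D i, where D i has
   homogeneous entries of degree 1 (so that the maps are graded of degree 0).
   Such a resolution is automatically minimal, and its existence is
   equivalent to the graded minimal free resolution of I being d-linear. *)
Definition has_linear_resolution (d : nat) (I : R -> Prop) : Prop :=
  exists (b : nat -> nat) (g : 'cV[R]_(b 0%N))
         (D : forall i : nat, 'M[R]_(b i.+1, b i)),
  [/\ forall j, g j 0 \is d.-homog,
      forall i j k, D i j k \is 1%N.-homog,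
      forall p, I p <-> exists v : 'rV[R]_(b 0%N), p = (v *m g) 0 0,
      forall v : 'rV[R]_(b 0%N),
        v *m g = 0 <-> exists w : 'rV[R]_(b 1%N), v = w *m D 0%N
    & forall (i : nat) (v : 'rV[R]_(b i.+1)),
        v *m D i = 0 <-> exists w : 'rV[R]_(b i.+2), v = w *m D i.+1].

End Defs.

(* Main.v *)
Require Import Defs.
From mathcomp Require Import all_boot all_order all_algebra.
From mathcomp Require Import mpoly.
From HB Require Import structures.
From mathcomp Require Import zify.
From Stdlib Require Import Classical IndefiniteDescription.
Set Implicit Arguments. Unset Strict Implicit. Unset Printing Implicit Defensive.
Import GRing.Theory.
Local Open Scope ring_scope.

Section Homog.
Variables (K : fieldType) (n : nat).
Local Notation R := {mpoly K[n]}.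

Lemma pihomogXM (q : R) e k m : q \is e.-homog ->
  pihomog mdeg k ('X_[m] * q) = if (mdeg m + e == k)%N then 'X_[m] * q else 0.
Proof.
move=> hq; have hX : ('X_[m] : R) \is (mdeg m).-homog by rewrite dhomogX.
have h := dhomogM hX hq.
case: eqP => [<-|ne]; first exact: pihomog_dE.
by apply: (pihomog_ne0 _ h); apply/eqP.
Qed.

Lemma pihomogM (p q : R) e k : q \is e.-homog ->
  pihomog mdeg k (p * q) = if (e <= k)%N then pihomog mdeg (k - e) p * q else 0.
Proof.
move=> hq.
have -> : p * q = \sum_(m <- msupp p) p@_m *: ('X_[m] * q).
  by rewrite {1}[p]mpolyE big_distrl /=; apply: eq_bigr => m _; rewrite scalerAl.
rewrite linear_sum /=.
under eq_bigr => m _ do rewrite linearZ /= (pihomogXM _ _ hq).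
case: ifP => hek.
  rewrite pihomogE big_distrl /= [in RHS]big_mkcond /=; apply: eq_bigr => m _.
  have -> : (mdeg m + e == k)%N = (mdeg m == k - e)%N.
    by apply/eqP/eqP; lia.
  by case: ifP => _; rewrite ?scalerAl ?mul0r ?scaler0.
rewrite big1 // => m _; have -> : (mdeg m + e == k)%N = false.
  by apply/eqP; lia.
by rewrite scaler0.
Qed.

Lemma homog0_const (c : R) : c \is 0.-homog -> c = (c@_0%MM)%:MP.
Proof.
move=> hc; apply/mpolyP => m; rewrite mcoeffC.
case: (eqVneq m 0%MM) => [->|ne]; first by rewrite mulr1.
rewrite mulr0; apply: (dhomog_nemf_coeff hc).
by rewrite /= mdeg_eq0.
Qed.

Lemma const_homog (c : K) : (c%:MP : R) \is 0.-homog.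
Proof. by apply/dhomogP => m; rewrite msuppC; case: eqP => // _; rewrite inE => /eqP ->; rewrite /= mdeg0. Qed.

End Homog.

Section MxHomog.
Variables (K : fieldType) (n : nat).
Local Notation R := {mpoly K[n]}.

Definition mhomog (e : nat) p q (M : 'M[R]_(p, q)) := forall i j, M i j \is e.-homog.

Lemma mhomog_mul e f p q r (A : 'M[R]_(p, q)) (B : 'M[R]_(q, r)) :
  mhomog e A -> mhomog f B -> mhomog (e + f) (A *m B).
Proof.
move=> hA hB i j; rewrite mxE; apply: rpred_sum => k _; exact: dhomogM.
Qed.

Lemma mhomogD e p q (A B : 'M[R]_(p, q)) : mhomog e A -> mhomog e B -> mhomog e (A + B).
Proof. by move=> hA hB i j; rewrite mxE; apply: rpredD. Qed.

Lemma mhomogN e p q (A : 'M[R]_(p, q)) : mhomog e A -> mhomog e (- A).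
Proof. by move=> hA i j; rewrite mxE -scaleN1r; apply: dhomogZ. Qed.

Lemma mhomog0 e p q : mhomog e (0 : 'M[R]_(p, q)).
Proof. by move=> i j; rewrite mxE; apply: rpred0. Qed.

Lemma mhomog1 p : mhomog 0 (1%:M : 'M[R]_p).
Proof. by move=> i j; rewrite mxE; case: eqP => _; [apply: dhomog1 | apply: rpred0]. Qed.

Lemma mhomog_row e p q1 q2 (A : 'M[R]_(p, q1)) (B : 'M[R]_(p, q2)) :
  mhomog e A -> mhomog e B -> mhomog e (row_mx A B).
Proof. by move=> hA hB i j; rewrite -[j]splitK; case: (split j) => k /=; rewrite ?row_mxEl ?row_mxEr. Qed.

Lemma mhomog_col e p1 p2 q (A : 'M[R]_(p1, q)) (B : 'M[R]_(p2, q)) :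
  mhomog e A -> mhomog e B -> mhomog e (col_mx A B).
Proof. by move=> hA hB i j; rewrite -[i]splitK; case: (split i) => k /=; rewrite ?col_mxEu ?col_mxEd. Qed.

Lemma mhomog_block e p1 p2 q1 q2 (A : 'M[R]_(p1, q1)) (B : 'M[R]_(p1, q2))
  (C : 'M[R]_(p2, q1)) (D : 'M[R]_(p2, q2)) :
  mhomog e A -> mhomog e B -> mhomog e C -> mhomog e D -> mhomog e (block_mx A B C D).
Proof. by move=> *; rewrite /block_mx; apply: mhomog_col; apply: mhomog_row. Qed.

Lemma mhomog_map0 p q (A : 'M[R]_(p, q)) : mhomog 0 (map_mx (pihomog mdeg 0) A).
Proof. by move=> i j; rewrite mxE; apply: pihomogP. Qed.

Lemma pihomog_mx_mul e p q s (v : 'M[R]_(p, q)) (g : 'M[R]_(q, s)) :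
  mhomog e g -> map_mx (pihomog mdeg e) (v *m g) = map_mx (pihomog mdeg 0) v *m g.
Proof.
move=> hg; apply/matrixP => i j; rewrite !mxE linear_sum /=; apply: eq_bigr => k _.
by rewrite (pihomogM _ _ (hg k j)) leqnn subnn mxE.
Qed.

Lemma pihomog_mx_mul0 e k p q s (v : 'M[R]_(p, q)) (g : 'M[R]_(q, s)) :
  mhomog e g -> (k < e)%N -> map_mx (pihomog mdeg k) (v *m g) = 0.
Proof.
move=> hg hk; apply/matrixP => i j; rewrite !mxE linear_sum /=; apply: big1 => l _.
by rewrite (pihomogM _ _ (hg l j)) leqNgt hk.
Qed.

Lemma mhomog_map_id e p q (A : 'M[R]_(p, q)) : mhomog e A -> map_mx (pihomog mdeg e) A = A.
Proof. by move=> hA; apply/matrixP => i j; rewrite mxE pihomog_dE. Qed.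

Lemma lift_const e p q s (N : 'M[R]_(p, s)) (g : 'M[R]_(q, s)) :
  mhomog e g -> mhomog e N -> (forall r, exists v : 'rV[R]_q, row r N = v *m g) ->
  exists C : 'M[R]_(p, q), mhomog 0 C /\ N = C *m g.
Proof.
move=> hg hN hex0.
have hex r : exists v : 'rV[R]_q, row r N == v *m g.
  by have [v hv] := hex0 r; exists v; apply/eqP.
exists (\matrix_(r < p) map_mx (pihomog mdeg 0) (xchoose (hex r))); split.
  by move=> i j; rewrite !mxE; apply: pihomogP.
apply/row_matrixP => r; rewrite row_mul rowK -(pihomog_mx_mul _ hg).
by rewrite -(eqP (xchooseP (hex r))); apply/matrixP => i j; rewrite !mxE pihomog_dE.
Qed.

Lemma min_const p q s (C : 'M[R]_(p, s)) (W : 'M[R]_(p, q)) (D : 'M[R]_(q, s)) :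
  mhomog 0 C -> mhomog 1 D -> C = W *m D -> C = 0.
Proof.
move=> hC hD eC; rewrite -(mhomog_map_id hC) eC; exact: pihomog_mx_mul0 hD _.
Qed.

Lemma mx_eq0_rows p q (M : 'M[R]_(p, q)) : (forall w : 'rV_p, w *m M = 0) -> M = 0.
Proof. by move=> h; apply/row_matrixP => i; rewrite rowE h row0. Qed.

End MxHomog.

Lemma complement_mx (K : fieldType) p q (phi : 'M[K]_(p, q)) :
  (forall x : 'rV_p, x *m phi = 0 -> x = 0) ->
  exists m (T : 'M[K]_(q, p)) (Q : 'M[K]_(q, m)) (S : 'M[K]_(m, q)),
   [/\ phi *m T = 1%:M, phi *m Q = 0, S *m T = 0, S *m Q = 1%:M
     & T *m phi + Q *m S = 1%:M].
Proof.
move=> inj.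
have rf : row_free phi.
  rewrite -kermx_eq0; apply/eqP/row_matrixP => i; rewrite row0; apply: inj.
  by rewrite -row_mul mulmx_ker row0.
set S := row_base (phi^C)%MS.
exists (\rank (phi^C)%MS).
set B := col_mx phi S.
have rB : \rank B = q.
  rewrite /B -addsmxE /S (adds_eqmx (eqmx_refl phi) (eq_row_base _)).
  by apply/eqP; apply: addsmx_compl_full.
have rp : \rank phi = p by apply/eqP.
have hfull : row_full B by rewrite /row_full rB.
have hfree : row_free B.
  rewrite /row_free rB mxrank_compl rp; apply/eqP.
  by have := rank_leq_col phi; rewrite rp => h; rewrite subnKC.
have [P1 hP1] := row_freeP hfree.
have [P2 hP2] := row_fullP hfull.
have eP : P2 = P1 by rewrite -[P2]mulmx1 -hP1 mulmxA hP2 mul1mx.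
rewrite eP in hP2.
exists (lsubmx P1), (rsubmx P1), S.
move: hP1 hP2; rewrite -[P1]hsubmxK /B mul_col_row mul_row_col scalar_mx_block.
rewrite row_mxKl row_mxKr.
by case/eq_block_mx => h1 h2 h3 h4 h5.
Qed.

Section ConstMx.
Variables (K : fieldType) (n : nat).
Local Notation R := {mpoly K[n]}.
Local Notation C := (map_mx (@mpolyC n K)).

Lemma const_mxE p q (M : 'M[R]_(p, q)) : mhomog 0 M -> M = C (map_mx (mcoeff 0%MM) M).
Proof. by move=> hM; apply/matrixP => i j; rewrite !mxE {1}(homog0_const (hM i j)). Qed.

Lemma mhomogC p q (M : 'M[K]_(p, q)) : mhomog 0 (C M).
Proof. by move=> i j; rewrite mxE; apply: const_homog. Qed.

Lemma const_complement p q (phi : 'M[R]_(p, q)) : mhomog 0 phi ->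
  (forall x : 'rV[R]_p, mhomog 0 x -> x *m phi = 0 -> x = 0) ->
  exists m (T : 'M[R]_(q, p)) (Q : 'M[R]_(q, m)) (S : 'M[R]_(m, q)),
   [/\ mhomog 0 T, mhomog 0 Q, mhomog 0 S &
   [/\ phi *m T = 1%:M, phi *m Q = 0, S *m T = 0, S *m Q = 1%:M
     & T *m phi + Q *m S = 1%:M]].
Proof.
move=> hphi inj; set phiK := map_mx (mcoeff 0%MM) phi.
have ephi : phi = C phiK by exact: const_mxE.
have injK : forall x : 'rV[K]_p, x *m phiK = 0 -> x = 0.
  move=> x hx; have := inj (C x) (mhomogC x).
  rewrite ephi -map_mxM hx map_mx0 => /(_ erefl) h.
  apply/matrixP => i j; have := congr1 (fun M : 'rV[R]_p => M i j) h.
  by rewrite !mxE => /(congr1 (mcoeff 0%MM)); rewrite mpolyCK mcoeff0.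
have [m [T [Q [S [h1 h2 h3 h4 h5]]]]] := complement_mx injK.
exists m, (C T), (C Q), (C S); split; try exact: mhomogC.
by rewrite ephi -!map_mxM h1 h2 h3 h4 -map_mxD h5 ?map_mx1 ?map_mx0.
Qed.

End ConstMx.

Section Gens.
Variables (K : fieldType) (n : nat).
Local Notation R := {mpoly K[n]}.

Lemma gen_of_mx N (g : 'cV[R]_N) (P : R -> Prop) :
  (forall p, P p <-> exists v : 'rV[R]_N, p = (v *m g) 0 0) ->
  generates [seq g i 0 | i <- enum 'I_N] P.
Proof.
move=> h p; rewrite h.
have sz : size [seq g i 0 | i <- enum 'I_N] = N by rewrite size_map size_enum_ord.
have nthE (i : 'I_N) : [seq g i 0 | i <- enum 'I_N]`_i = g i 0.
  by rewrite (nth_map i) ?size_enum_ord // nth_ord_enum.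
rewrite sz; split.
  move=> [v ->]; exists (fun i => v 0 i); rewrite mxE; apply: eq_bigr => i _.
  by rewrite nthE.
move=> [c ->]; exists (\row_i c i); rewrite mxE; apply: eq_bigr => i _.
by rewrite nthE mxE.
Qed.

Lemma extract_min (P : R -> Prop) s : all (fun p => p \is homog mdeg) s -> generates s P ->
  exists s', minimal_homog_gens s' P.
Proof.
have [k] := ubnP (size s); elim: k s => // k IH s hs hh hg.
case: (classic (exists i : 'I_(size s), generates (take i s ++ drop i.+1 s) P)).
  move=> [i hi]; apply: (IH _ _ _ hi).
    rewrite size_cat size_take size_drop ltn_ord.
    by have := ltn_ord i; move: hs; clear; lia.
  apply/allP => x; rewrite mem_cat => /orP [/mem_take | /mem_drop] hx; exact: (allP hh).
move=> hn; exists s; split => // i hi; apply: hn; exists i; exact: hi.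
Qed.

Lemma Ad0 (P : R -> Prop) s d : generates s P -> all (fun p => p \is d.+1.-homog) s ->
  forall a, P a -> a \is d.-homog -> a = 0.
Proof.
move=> hg hs a /hg [c ea] ha.
rewrite -(pihomog_dE ha) ea linear_sum /= big1 // => i _.
have hi : s`_i \is d.+1.-homog by apply: (allP hs); apply: mem_nth.
by rewrite (pihomogM _ _ hi) ltnn.
Qed.

End Gens.

Section Main.
Variables (K : fieldType) (n d : nat).
Local Notation R := {mpoly K[n]}.

Lemma kill_const p q s t (Cm : 'M[R]_(p, q)) (g : 'M[R]_(q, s)) (D : 'M[R]_(t, q)) :
  mhomog 0 Cm -> mhomog 1 D -> (forall x : 'rV_q, x *m g = 0 -> exists w, x = w *m D) ->
  Cm *m g = 0 -> Cm = 0.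
Proof.
move=> hC hD ex e; apply/row_matrixP => r; rewrite row0.
have e' : row r Cm *m g = 0 by rewrite -row_mul e row0.
have [w hw] := ex (row r Cm) e'.
by apply: (min_const _ hD hw) => i j; rewrite mxE.
Qed.

Variables (I J : R -> Prop).
Variables (bF : nat -> nat) (gF : 'cV[R]_(bF 0)) (DF : forall i, 'M[R]_(bF i.+1, bF i)).
Hypotheses (hgF : forall j, gF j 0 \is d.-homog) (hDF : forall i j k, DF i j k \is 1.-homog)
  (hIF : forall p, I p <-> exists v : 'rV[R]_(bF 0), p = (v *m gF) 0 0)
  (e0F : forall v : 'rV[R]_(bF 0), v *m gF = 0 <-> exists w : 'rV[R]_(bF 1), v = w *m DF 0)
  (eSF : forall i (v : 'rV[R]_(bF i.+1)), v *m DF i = 0 <-> exists w : 'rV[R]_(bF i.+2), v = w *m DF i.+1).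
Variables (bG : nat -> nat) (gG : 'cV[R]_(bG 0)) (DG : forall i, 'M[R]_(bG i.+1, bG i)).
Hypotheses (hgG : forall j, gG j 0 \is d.-homog) (hDG : forall i j k, DG i j k \is 1.-homog)
  (hIG : forall p, J p <-> exists v : 'rV[R]_(bG 0), p = (v *m gG) 0 0)
  (e0G : forall v : 'rV[R]_(bG 0), v *m gG = 0 <-> exists w : 'rV[R]_(bG 1), v = w *m DG 0)
  (eSG : forall i (v : 'rV[R]_(bG i.+1)), v *m DG i = 0 <-> exists w : 'rV[R]_(bG i.+2), v = w *m DG i.+1).
Variables (bH : nat -> nat) (gH : 'cV[R]_(bH 0)) (DH : forall i, 'M[R]_(bH i.+1, bH i)).
Hypotheses (hgH : forall j, gH j 0 \is d.-homog) (hDH : forall i j k, DH i j k \is 1.-homog)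
  (hIH : forall p, (exists a b, [/\ I a, J b & p = a + b]) <-> exists v : 'rV[R]_(bH 0), p = (v *m gH) 0 0)
  (e0H : forall v : 'rV[R]_(bH 0), v *m gH = 0 <-> exists w : 'rV[R]_(bH 1), v = w *m DH 0)
  (eSH : forall i (v : 'rV[R]_(bH i.+1)), v *m DH i = 0 <-> exists w : 'rV[R]_(bH i.+2), v = w *m DH i.+1).

Definition bFG i := (bF i + bG i)%N.
Definition DFG i : 'M[R]_(bFG i.+1, bFG i) := block_mx (DF i) 0 0 (DG i).
Definition uFG : 'cV[R]_(bFG 0) := col_mx gF gG.
Definition iF : 'cV[R]_(bFG 0) := col_mx gF 0.

Lemma mhF : mhomog d gF. Proof. by move=> i j; rewrite ord1. Qed.
Lemma mhG : mhomog d gG. Proof. by move=> i j; rewrite ord1. Qed.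
Lemma mhH : mhomog d gH. Proof. by move=> i j; rewrite ord1. Qed.
Lemma mhDH i : mhomog 1 (DH i). Proof. by move=> j k; apply: hDH. Qed.
Lemma mhDFG i : mhomog 1 (DFG i).
Proof.
apply: mhomog_block; [move=> j k; exact: hDF | exact: mhomog0 | exact: mhomog0 | move=> j k; exact: hDG].
Qed.
Lemma mhuFG : mhomog d uFG. Proof. apply: mhomog_col; [exact: mhF | exact: mhG]. Qed.
Lemma mhiF : mhomog d iF. Proof. apply: mhomog_col; [exact: mhF | exact: mhomog0]. Qed.

Lemma DF0g : DF 0 *m gF = 0.
Proof. by apply: mx_eq0_rows => w; rewrite mulmxA; apply/e0F; exists w. Qed.
Lemma DG0g : DG 0 *m gG = 0.
Proof. by apply: mx_eq0_rows => w; rewrite mulmxA; apply/e0G; exists w. Qed.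
Lemma DH0g : DH 0 *m gH = 0.
Proof. by apply: mx_eq0_rows => w; rewrite mulmxA; apply/e0H; exists w. Qed.
Lemma DFSS i : DF i.+1 *m DF i = 0.
Proof. by apply: mx_eq0_rows => w; rewrite mulmxA; apply/eSF; exists w. Qed.
Lemma DGSS i : DG i.+1 *m DG i = 0.
Proof. by apply: mx_eq0_rows => w; rewrite mulmxA; apply/eSG; exists w. Qed.
Lemma DHSS i : DH i.+1 *m DH i = 0.
Proof. by apply: mx_eq0_rows => w; rewrite mulmxA; apply/eSH; exists w. Qed.

Lemma DFG0u : DFG 0 *m uFG = 0.
Proof. by rewrite /DFG /uFG mul_block_col !mul0mx addr0 add0r DF0g DG0g col_mx0. Qed.
Lemma DFG0i : DFG 0 *m iF = 0.
Proof. by rewrite /DFG /iF mul_block_col !mul0mx !mulmx0 !addr0 DF0g col_mx0. Qed.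
Lemma DFGSS i : DFG i.+1 *m DFG i = 0.
Proof.
by rewrite /DFG mulmx_block !mulmx0 !mul0mx !addr0 !add0r DFSS DGSS block_mx0.
Qed.

Lemma rowFG p (x : 'M[R]_(p, bFG 0)) (c : 'M[R]_(bF 0 + bG 0, 1)) : x *m c = lsubmx x *m usubmx c + rsubmx x *m dsubmx c.
Proof. by rewrite -{1}[x]hsubmxK -{1}[c]vsubmxK mul_row_col. Qed.

Lemma FGex0 (x : 'rV[R]_(bFG 0)) : lsubmx x *m gF = 0 -> rsubmx x *m gG = 0 ->
  exists z, x = z *m DFG 0.
Proof.
move=> /e0F [zF hF] /e0G [zG hG]; exists (row_mx zF zG).
by rewrite /DFG mul_row_block !mulmx0 addr0 add0r -hF -hG hsubmxK.
Qed.

Lemma FGexS i (x : 'rV[R]_(bFG i.+1)) : x *m DFG i = 0 -> exists z, x = z *m DFG i.+1.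
Proof.
rewrite -[x]hsubmxK /DFG mul_row_block !mulmx0 addr0 add0r -row_mx0 => /eq_row_mx [h1 h2].
have [zF hF] := (eSF _).1 h1; have [zG hG] := (eSG _).1 h2.
by exists (row_mx zF zG); rewrite mul_row_block !mulmx0 addr0 add0r -hF -hG.
Qed.

Lemma in_I_gF k : I (gF k 0).
Proof. by apply/hIF; exists (delta_mx 0 k); rewrite -rowE mxE. Qed.
Lemma in_J_gG k : J (gG k 0).
Proof. by apply/hIG; exists (delta_mx 0 k); rewrite -rowE mxE. Qed.
Lemma in_I0 : I 0.
Proof. by apply/hIF; exists 0; rewrite mul0mx mxE. Qed.
Lemma in_J0 : J 0.
Proof. by apply/hIG; exists 0; rewrite mul0mx mxE. Qed.

Lemma row_cV q s (c : 'cV[R]_q) (M : 'cV[R]_s) k (v : 'rV[R]_s) :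
  c k 0 = (v *m M) 0 0 -> row k c = v *m M.
Proof. by move=> h; apply/matrixP => i j; rewrite !ord1 mxE. Qed.

Lemma uFG_in_H k : exists v : 'rV[R]_(bH 0), row k uFG = v *m gH.
Proof.
have : exists a b, [/\ I a, J b & uFG k 0 = a + b].
  rewrite /uFG -[k]splitK; case: (split k) => k' /=.
    by exists (gF k' 0), 0; rewrite col_mxEu addr0; split => //; [exact: in_I_gF | exact: in_J0].
  by exists 0, (gG k' 0); rewrite col_mxEd add0r; split => //; [exact: in_I0 | exact: in_J_gG].
by move/hIH => [v hv]; exists v; apply: row_cV.
Qed.

Definition Inv i (M : 'M[R]_(bFG i, bH i)) := mhomog 0 M /\
  forall w : 'rV[R]_(bFG i.+1), exists y : 'rV[R]_(bH i.+1), w *m DFG i *m M = y *m DH i.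

Lemma phi0_ex : exists M, Inv M /\ M *m gH = uFG.
Proof.
have [C [hC e]] := lift_const mhH mhuFG uFG_in_H.
exists C; split => //; split => // w; apply/e0H.
by rewrite -mulmxA -e -mulmxA DFG0u mulmx0.
Qed.

Lemma step i M : Inv M -> exists N, Inv N /\ DFG i *m M = N *m DH i.
Proof.
move=> [hM hw].
have hDM := mhomog_mul (@mhDFG i) hM; rewrite addn0 in hDM.
have rows r : exists v : 'rV[R]_(bH i.+1), row r (DFG i *m M) = v *m DH i.
  by have [y hy] := hw (delta_mx 0 r); exists y; rewrite rowE mulmxA hy.
have [N [hN e]] := lift_const (@mhDH i) hDM rows.
exists N; split => //; split => // w; apply/eSH.
by rewrite -mulmxA -e mulmxA -(mulmxA w) DFGSS mulmx0 mul0mx.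
Qed.

Definition phi0c := constructive_indefinite_description _ phi0_ex.

Fixpoint phis (i : nat) : {M : 'M[R]_(bFG i, bH i) | Inv M} :=
  match i with
  | 0 => exist _ (sval phi0c) (proj1 (svalP phi0c))
  | i'.+1 => let c := constructive_indefinite_description _ (step (svalP (phis i'))) in
             exist _ (sval c) (proj1 (svalP c))
  end.

Definition phi i := sval (phis i).

Lemma phi_const i : mhomog 0 (phi i).
Proof. exact: (proj1 (svalP (phis i))). Qed.

Lemma phi0_eq : phi 0 *m gH = uFG.
Proof. exact: (proj2 (svalP phi0c)). Qed.

Lemma phi_chain i : DFG i *m phi i = phi i.+1 *m DH i.
Proof. exact: (proj2 (svalP (constructive_indefinite_description _ (step (svalP (phis i)))))). Qed.

Lemma mulFG p (x : 'M[R]_(p, bFG 0)) (a : 'cV[R]_(bF 0)) (b : 'cV[R]_(bG 0)) :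
  x *m col_mx a b = lsubmx x *m a + rsubmx x *m b.
Proof. by rewrite -{1}[x]hsubmxK mul_row_col. Qed.

Lemma sigma_ex : exists S : 'M[R]_(bH 0, bFG 0), mhomog 0 S /\ gH = S *m uFG.
Proof.
apply: (lift_const mhuFG mhH) => k.
have : exists v : 'rV[R]_(bH 0), gH k 0 = (v *m gH) 0 0.
  by exists (delta_mx 0 k); rewrite -rowE mxE.
move/hIH => [a [b [/hIF [vF ea] /hIG [vG eb] e]]].
by exists (row_mx vF vG); apply: row_cV; rewrite /uFG mul_row_col mxE e ea eb.
Qed.

Definition sigma := sval (constructive_indefinite_description _ sigma_ex).
Lemma sigma_const : mhomog 0 sigma.
Proof. exact: (proj1 (svalP (constructive_indefinite_description _ sigma_ex))). Qed.
Lemma sigma_eq : gH = sigma *m uFG.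
Proof. exact: (proj2 (svalP (constructive_indefinite_description _ sigma_ex))). Qed.

Lemma sigma_phi0 : sigma *m phi 0 = 1%:M.
Proof.
apply/eqP; rewrite -subr_eq0; apply/eqP.
apply: (kill_const (g := gH) (D := DH 0)).
- apply: mhomogD; last by apply: mhomogN; exact: mhomog1.
  exact: (mhomog_mul sigma_const (@phi_const 0)).
- exact: mhDH.
- by move=> x /e0H.
- by rewrite mulmxBl mul1mx -mulmxA phi0_eq -sigma_eq subrr.
Qed.

Lemma A_char p : (I p /\ J p) <-> exists x : 'rV[R]_(bFG 0), x *m uFG = 0 /\ p = (x *m iF) 0 0.
Proof.
split.
  move=> [/hIF [vF eF] /hIG [vG eG]]; exists (row_mx vF (- vG)); split.
    rewrite /uFG mul_row_col mulNmx; apply/eqP; rewrite subr_eq0; apply/eqP.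
    by apply/matrixP => i j; rewrite !ord1 -eF -eG.
  by rewrite /iF mul_row_col mulmx0 addr0.
move=> [x [hu ->]]; rewrite /iF mulFG mulmx0 addr0; split.
  by apply/hIF; exists (lsubmx x).
apply/hIG; exists (- rsubmx x).
move: hu; rewrite /uFG mulFG => /eqP; rewrite addr_eq0 => /eqP ->.
by rewrite mulNmx.
Qed.

Definition Pi := 1%:M - phi 0 *m sigma.
Definition gam : 'cV[R]_(bFG 0 + bH 1) := col_mx (Pi *m iF) (DH 0 *m sigma *m iF).

Lemma gam_gen p : (I p /\ J p) <-> exists v : 'rV[R]_(bFG 0 + bH 1), p = (v *m gam) 0 0.
Proof.
rewrite A_char; split.
  move=> [x [hu ->]].
  have : (x *m phi 0) *m gH = 0 by rewrite -mulmxA phi0_eq.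
  move/e0H => [y hy].
  exists (row_mx x y); rewrite /gam mul_row_col !mulmxA -hy /Pi mulmxBr mulmx1.
  by rewrite mulmxBl -!mulmxA subrK.
move=> [v ->]; exists (lsubmx v *m Pi + rsubmx v *m DH 0 *m sigma); split.
  rewrite -phi0_eq mulmxA mulmxDl /Pi mulmxBr mulmx1 mulmxBl -!mulmxA sigma_phi0 !mulmx1 subrr add0r.
  by rewrite -mulmxA DH0g mulmx0.
by rewrite /gam -{1}[v]hsubmxK mul_row_col [in RHS]mulmxDl !mulmxA.
Qed.

Lemma gam_homog i : gam i 0 \is homog mdeg.
Proof.
rewrite /gam -[i]splitK; case: (split i) => k /=.
  rewrite col_mxEu; apply: (@homogE _ _ _ d).
  have h : mhomog 0 Pi.
    apply: mhomogD; first exact: mhomog1.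
    by apply: mhomogN; exact: (mhomog_mul (@phi_const 0) sigma_const).
  exact: (mhomog_mul h mhiF).
rewrite col_mxEd; apply: (@homogE _ _ _ (1 + 0 + d)).
exact: (mhomog_mul (mhomog_mul (@mhDH 0) sigma_const) mhiF).
Qed.

Lemma hA0_of : (forall s, minimal_homog_gens s (ideal_cap I J) -> all (fun p => p \is d.+1.-homog) s) ->
  forall a, I a -> J a -> a \is d.-homog -> a = 0.
Proof.
move=> hmin a ha hb hd.
have hg : generates [seq gam i 0 | i <- enum 'I_(bFG 0 + bH 1)] (ideal_cap I J).
  by apply: gen_of_mx => p; exact: gam_gen.
have hh : all (fun p => p \is homog mdeg) [seq gam i 0 | i <- enum 'I_(bFG 0 + bH 1)].
  by apply/allP => x /mapP [i _ ->]; apply: gam_homog.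
have [s' hs'] := extract_min hh hg.
have hall := hmin s' hs'.
case: hs' => _ hgs' _.
exact: (Ad0 hgs' hall (conj ha hb) hd).
Qed.

Hypothesis hA0 : forall a, I a -> J a -> a \is d.-homog -> a = 0.

Lemma phi0_cinj (x : 'rV[R]_(bFG 0)) : mhomog 0 x -> x *m phi 0 = 0 -> x = 0.
Proof.
move=> hx e.
have hu : x *m uFG = 0 by rewrite -phi0_eq mulmxA e mul0mx.
have hxi : x *m iF = 0.
  apply/matrixP => i j; rewrite !ord1 [RHS]mxE.
  have [hI hJ] := (A_char ((x *m iF) 0 0)).2 (ex_intro _ x (conj hu erefl)).
  apply: hA0 => //; exact: (mhomog_mul hx mhiF).
have hl : lsubmx x = 0.
  apply: (kill_const (g := gF) (D := DF 0)).
  - by move=> i j; rewrite mxE; exact: hx.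
  - by move=> i j; exact: hDF.
  - by move=> y /e0F.
  - by move: hxi; rewrite /iF mulFG mulmx0 addr0.
have hr : rsubmx x = 0.
  apply: (kill_const (g := gG) (D := DG 0)).
  - by move=> i j; rewrite mxE; exact: hx.
  - by move=> i j; exact: hDG.
  - by move=> y /e0G.
  - by move: hu; rewrite /uFG mulFG hl mul0mx add0r.
by rewrite -[x]hsubmxK hl hr row_mx0.
Qed.

Lemma phi0_sigma : phi 0 *m sigma = 1%:M.
Proof.
have hC : mhomog 0 (phi 0 *m sigma - 1%:M).
  apply: mhomogD; last by apply: mhomogN; exact: mhomog1.
  exact: (mhomog_mul (@phi_const 0) sigma_const).
apply/eqP; rewrite -subr_eq0; apply/eqP; apply/row_matrixP => r; rewrite row0.
apply: phi0_cinj; first by move=> i j; rewrite mxE; exact: hC.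
by rewrite -row_mul mulmxBl mul1mx -mulmxA sigma_phi0 mulmx1 subrr row0.
Qed.

Lemma Pinj_cinj i : (forall z : 'rV[R]_(bFG i), z *m phi i = 0 -> z = 0) ->
  forall x : 'rV[R]_(bFG i.+1), mhomog 0 x -> x *m phi i.+1 = 0 -> x = 0.
Proof.
move=> inj x hx e.
have e1 : x *m DFG i = 0 by apply: inj; rewrite -mulmxA phi_chain mulmxA e mul0mx.
apply: (kill_const (g := DFG i) (D := DFG i.+1)) => //.
- exact: mhDFG.
- by move=> y /FGexS.
Qed.

Lemma Pinj i : forall z : 'rV[R]_(bFG i), z *m phi i = 0 -> z = 0.
Proof.
elim: i => [|i IH] z hz.
  by rewrite -[z]mulmx1 -phi0_sigma mulmxA hz mul0mx.
have [m [T [Q [S [_ _ _ [h1 _ _ _ _]]]]]] := const_complement (@phi_const i.+1) (Pinj_cinj IH).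
by rewrite -[z]mulmx1 -h1 mulmxA hz mul0mx.
Qed.

Definition cinj i : forall x : 'rV[R]_(bFG i), mhomog 0 x -> x *m phi i = 0 -> x = 0 :=
  match i with 0 => phi0_cinj | i'.+1 => Pinj_cinj (@Pinj i') end.

Definition cd1 i := constructive_indefinite_description _ (const_complement (@phi_const i) (@cinj i)).
Definition mm i : nat := sval (cd1 i).
Definition cd2 i := constructive_indefinite_description _ (svalP (cd1 i)).
Definition TT i : 'M[R]_(bH i, bFG i) := sval (cd2 i).
Definition cd3 i := constructive_indefinite_description _ (svalP (cd2 i)).
Definition QQ i : 'M[R]_(bH i, mm i) := sval (cd3 i).
Definition cd4 i := constructive_indefinite_description _ (svalP (cd3 i)).
Definition SS i : 'M[R]_(mm i, bH i) := sval (cd4 i).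
Lemma cd_spec i : [/\ mhomog 0 (TT i), mhomog 0 (QQ i), mhomog 0 (SS i) &
   [/\ phi i *m TT i = 1%:M, phi i *m QQ i = 0, SS i *m TT i = 0, SS i *m QQ i = 1%:M
     & TT i *m phi i + QQ i *m SS i = 1%:M]].
Proof. exact: (svalP (cd4 i)). Qed.

Lemma TT_c i : mhomog 0 (TT i). Proof. by case: (cd_spec i). Qed.
Lemma QQ_c i : mhomog 0 (QQ i). Proof. by case: (cd_spec i). Qed.
Lemma SS_c i : mhomog 0 (SS i). Proof. by case: (cd_spec i). Qed.
Lemma phiQ i : phi i *m QQ i = 0. Proof. by case: (cd_spec i) => _ _ _ []. Qed.
Lemma SQ i : SS i *m QQ i = 1%:M. Proof. by case: (cd_spec i) => _ _ _ []. Qed.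
Lemma TPQS i : TT i *m phi i + QQ i *m SS i = 1%:M. Proof. by case: (cd_spec i) => _ _ _ []. Qed.
Lemma QS i : QQ i *m SS i = 1%:M - TT i *m phi i.
Proof. by rewrite -[in RHS](TPQS i) [in RHS]addrC addKr. Qed.

Lemma K1 i : DH i *m QQ i = QQ i.+1 *m SS i.+1 *m DH i *m QQ i.
Proof.
rewrite -[LHS]mul1mx -(TPQS i.+1) !mulmxDl -!mulmxA (mulmxA (phi i.+1)) -phi_chain.
by rewrite -(mulmxA (DFG i)) phiQ !mulmx0 add0r.
Qed.

Lemma K2 i : DH i.+1 *m (QQ i.+1 *m SS i.+1) *m DH i = - (DH i.+1 *m TT i.+1 *m (DFG i *m phi i)).
Proof.
rewrite QS mulmxBr mulmx1 mulmxBl DHSS sub0r phi_chain !mulmxA.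
done.
Qed.

Definition bA j := mm j.+1.
Definition gA : 'cV[R]_(bA 0) := SS 1 *m DH 0 *m sigma *m iF.
Definition DA j : 'M[R]_(bA j.+1, bA j) := SS j.+2 *m DH j.+1 *m QQ j.+1.

Lemma DA0gA : DA 0 *m gA = 0.
Proof.
rewrite /DA /gA !mulmxA.
have -> : SS 2 *m DH 1 *m QQ 1 *m SS 1 *m DH 0 = SS 2 *m (DH 1 *m (QQ 1 *m SS 1) *m DH 0).
  by rewrite !mulmxA.
rewrite K2 mulmxN !mulNmx -!mulmxA (mulmxA (phi 0)) phi0_sigma mul1mx DFG0i.
by rewrite !mulmx0 oppr0.
Qed.

Lemma DASS i : DA i.+1 *m DA i = 0.
Proof.
rewrite /DA !mulmxA.
have -> : SS i.+3 *m DH i.+2 *m QQ i.+2 *m SS i.+2 *m DH i.+1 =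
   SS i.+3 *m (DH i.+2 *m (QQ i.+2 *m SS i.+2) *m DH i.+1).
  by rewrite !mulmxA.
rewrite K2 mulmxN !mulNmx -!mulmxA phiQ.
by rewrite !mulmx0 oppr0.
Qed.

Lemma gA_homog j : gA j 0 \is d.+1.-homog.
Proof.
have h := mhomog_mul (mhomog_mul (mhomog_mul (@SS_c 1) (@mhDH 0)) sigma_const) mhiF.
exact: h.
Qed.

Lemma DA_homog i j k : DA i j k \is 1.-homog.
Proof.
have h := mhomog_mul (mhomog_mul (@SS_c i.+2) (@mhDH i.+1)) (@QQ_c i.+1).
exact: h.
Qed.

Lemma A_aug p : (I p /\ J p) <-> exists v : 'rV[R]_(bA 0), p = (v *m gA) 0 0.
Proof.
rewrite A_char; split.
  move=> [x [hu ->]].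
  have : (x *m phi 0) *m gH = 0 by rewrite -mulmxA phi0_eq.
  move/e0H => [y hy].
  have ex : x = y *m DH 0 *m sigma by rewrite -hy -mulmxA phi0_sigma mulmx1.
  exists (y *m QQ 1).
  rewrite ex /gA !mulmxA -(mulmxA y (QQ 1)) -[in LHS](mulmx1 y) -(TPQS 1).
  rewrite mulmxDr mulmxDl mulmxDl mulmxDl !mulmxA.
  have -> : y *m TT 1 *m phi 1 *m DH 0 *m sigma *m iF = 0.
    by rewrite -(mulmxA _ (phi 1)) -phi_chain -!mulmxA (mulmxA (phi 0)) phi0_sigma mul1mx DFG0i !mulmx0.
  by rewrite add0r.
move=> [v ->]; exists (v *m SS 1 *m DH 0 *m sigma); split.
  by rewrite -phi0_eq -!mulmxA (mulmxA sigma) sigma_phi0 mul1mx DH0g !mulmx0.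
by rewrite /gA !mulmxA.
Qed.

Lemma A_ex0 (v : 'rV[R]_(bA 0)) : v *m gA = 0 <-> exists w : 'rV[R]_(bA 1), v = w *m DA 0.
Proof.
split; last by move=> [w ->]; rewrite -mulmxA DA0gA mulmx0.
move=> hv; set x := v *m SS 1 *m DH 0 *m sigma.
have hxi : x *m iF = 0 by rewrite /x -hv /gA !mulmxA.
have hxp : x *m phi 0 = v *m SS 1 *m DH 0 by rewrite /x -mulmxA sigma_phi0 mulmx1.
have hu : x *m uFG = 0 by rewrite -phi0_eq mulmxA hxp -!mulmxA DH0g !mulmx0.
have hl : lsubmx x *m gF = 0 by move: hxi; rewrite /iF mulFG mulmx0 addr0.
have hr : rsubmx x *m gG = 0 by move: hu; rewrite /uFG mulFG hl add0r.
have [z hz] := FGex0 hl hr.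
have : (v *m SS 1 - z *m phi 1) *m DH 0 = 0.
  by rewrite mulmxBl -hxp hz -mulmxA phi_chain mulmxA subrr.
move/(eSH _).1 => [w' hw'].
exists (w' *m QQ 2).
have ev : v = w' *m DH 1 *m QQ 1.
  by rewrite -hw' mulmxBl -!mulmxA phiQ SQ mulmx1 mulmx0 subr0.
by rewrite ev /DA -(mulmxA w') K1 !mulmxA.
Qed.

Lemma A_exS i (v : 'rV[R]_(bA i.+1)) : v *m DA i = 0 <-> exists w : 'rV[R]_(bA i.+2), v = w *m DA i.+1.
Proof.
split; last by move=> [w ->]; rewrite -mulmxA DASS mulmx0.
move=> hv; set y := v *m SS i.+2 *m DH i.+1.
have hyQ : y *m QQ i.+1 = 0 by rewrite /y -hv /DA !mulmxA.
have ey : y = y *m TT i.+1 *m phi i.+1.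
  by rewrite -[in LHS](mulmx1 y) -(TPQS i.+1) mulmxDr !mulmxA hyQ mul0mx addr0.
set z := y *m TT i.+1.
have hz0 : z *m DFG i = 0.
  apply: Pinj; rewrite -mulmxA phi_chain mulmxA -ey /y -!mulmxA DHSS !mulmx0 //.
have [z' hz'] := FGexS hz0.
have : (v *m SS i.+2 - z' *m phi i.+2) *m DH i.+1 = 0.
  rewrite mulmxBl -/y -mulmxA -phi_chain mulmxA -hz' -/z -ey subrr //.
move/(eSH _).1 => [w' hw'].
exists (w' *m QQ i.+3).
have ev : v = w' *m DH i.+2 *m QQ i.+2.
  by rewrite -hw' mulmxBl -!mulmxA phiQ SQ mulmx1 mulmx0 subr0.
by rewrite ev /DA -(mulmxA w') K1 !mulmxA.
Qed.

Lemma final : has_linear_resolution d.+1 (ideal_cap I J).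
Proof.
exists bA, gA, DA; split.
- exact: gA_homog.
- exact: DA_homog.
- exact: A_aug.
- exact: A_ex0.
- exact: A_exS.
Qed.

End Main.


Theorem lemma3p12 (K : fieldType) (n d : nat) (I J : {mpoly K[n]} -> Prop) :
  is_graded_ideal I -> is_graded_ideal J ->
  has_linear_resolution d I -> has_linear_resolution d J ->
  has_linear_resolution d (ideal_sum I J) ->
  (forall s : seq {mpoly K[n]}, minimal_homog_gens s (ideal_cap I J) ->
     all (fun p => p \is d.+1.-homog) s) ->
  has_linear_resolution d.+1 (ideal_cap I J).
Proof.
move=> _ _ [bF [gF [DF [hgF hDF hIF e0F eSF]]]] [bG [gG [DG [hgG hDG hIG e0G eSG]]]]
  [bH [gH [DH [hgH hDH hIH e0H eSH]]]] hmin.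
have hA0 := hA0_of hgF hDF hIF e0F eSF hgG hDG hIG e0G eSG hgH hDH hIH e0H eSH hmin.
exact: (final hgF hDF hIF e0F eSF hgG hDG hIG e0G eSG hgH hDH hIH e0H eSH hA0).
Qed.
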